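(* In the setting of the context, for every $i\in\{1,\dots,N\}$, $$C_i:=\sum_{j=1}^M\sum_{l\ne i}|U_{j,s_i}|\,|U_{j,s_l}|\le 2\sqrt{\eta\,kN^{\gamma+1}},$$ where $\eta=\max_\alpha\eta_\alpha$.
   Context: $M=kN^\gamma$ modes ($k>0$, $\gamma>1$, $M\ge N$) partitioned into $N$ disjoint sublattices $\mathcal L_1,\dots,\mathcal L_N$ of $M/N$ modes each, sublattice $\mathcal L_\alpha$ containing exactly one source mode $s_\alpha$. $U$ is an $M\times M$ unitary (of a linear-optical circuit, $\hat a_j\mapsto\sum_kU_{jk}\hat a_k$). The leakage rate of source $\alpha$ is $\eta_\alpha=\sum_{j\notin\mathcal L_\alpha}|U_{j,s_\alpha}|^2$. *)

(* Defs.v *)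
From HB Require Import structures.
From mathcomp Require Import all_boot all_order all_algebra.
From mathcomp Require Import all_classical all_reals all_analysis.
From mathcomp Require Import complex.
Set Implicit Arguments. Unset Strict Implicit. Unset Printing Implicit Defensive.
Import Order.TTheory GRing.Theory Num.Theory.
Local Open Scope ring_scope.

Definition cmod (R : realType) (z : R[i]) : R := Normc.normc z.

Definition unitary_mx (R : realType) (M : nat) (U : 'M[R[i]]_M) : Prop :=
  U *m (map_mx conjc U)^T = 1%:M.

(* Leakage rate of source alpha: sum over modes j outside sublattice alpha
   of |U_{j, s_alpha}|^2.  Mode j belongs to sublattice (lat j). *)
Definition leakage (R : realType) (M N : nat) (U : 'M[R[i]]_M)
  (lat : 'I_M -> 'I_N) (s : 'I_N -> 'I_M) (a : 'I_N) : R :=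
  \sum_(j < M | lat j != a) cmod (U j (s a)) ^+ 2.

(* eta = max_alpha eta_alpha (leakage rates are nonnegative, so 0 is a
   harmless neutral element). *)
Definition max_leakage (R : realType) (M N : nat) (U : 'M[R[i]]_M)
  (lat : 'I_M -> 'I_N) (s : 'I_N -> 'I_M) : R :=
  \big[Num.max/0]_(a < N) leakage U lat s a.

Definition crosstalk (R : realType) (M N : nat) (U : 'M[R[i]]_M)
  (s : 'I_N -> 'I_M) (i : 'I_N) : R :=
  \sum_(j < M) \sum_(l < N | l != i) cmod (U j (s i)) * cmod (U j (s l)).

(* Main.v *)
Require Import Defs.
From HB Require Import structures.
From mathcomp Require Import all_boot all_order all_algebra.
From mathcomp Require Import all_classical all_reals all_analysis.
From mathcomp Require Import complex.
Import Order.TTheory GRing.Theory Num.Theory.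
Local Open Scope ring_scope.
From mathcomp Require Import ring lra.

Lemma cmodE (R : realType) (z : R[i]) : `|z| = ((cmod z)%:C)%C.
Proof. by case: z. Qed.

Lemma cmod_ge0 (R : realType) (z : R[i]) : 0 <= cmod z.
Proof. by case: z => a b; rewrite /cmod /= sqrtr_ge0. Qed.

Lemma col_norm (R : realType) (M : nat) (U : 'M[R[i]]_M) c :
  unitary_mx U -> \sum_(j < M) cmod (U j c) ^+ 2 = 1.
Proof.
move=> /mulmx1C /(congr1 (fun A : 'M[R[i]]_M => A c c)); rewrite !mxE eqxx /= => H.
have: ((\sum_(j < M) cmod (U j c) ^+ 2)%:C)%C = (1 : R[i]).

  apply: (etrans _ H); rewrite rmorph_sum /=; apply: eq_bigr => j _.
  by rewrite !mxE rmorphXn /= -cmodE sqr_normc mulrC.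
by case.
Qed.
Lemma cs (R : realType) n (P : pred 'I_n) (a b : 'I_n -> R) e :
 (forall j, 0 <= a j) -> (forall j, 0 <= b j) ->
 \sum_(j | P j) a j ^+ 2 <= e -> \sum_j b j ^+ 2 <= 1 ->
 \sum_(j | P j) a j * b j <= Num.sqrt e.
Proof.
move=> a0 b0 ha hb.
have e0 : 0 <= e by apply: le_trans ha; apply: sumr_ge0 => j _; exact: sqr_ge0.
have hbP : \sum_(j | P j) b j ^+ 2 <= 1.
  apply: le_trans hb; rewrite [X in _ <= X](bigID P) /= lerDl.
  by apply: sumr_ge0 => j _; exact: sqr_ge0.
have [e00|ep] := eqVneq e 0.
  subst e.
  have : \sum_(j | P j) a j ^+ 2 = 0.
    by apply/eqP; rewrite eq_le ha; apply: sumr_ge0 => j _; exact: sqr_ge0.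
  move/psumr_eq0P => H.
  rewrite sqrtr0 big1 // => j Pj.
  have := H (fun i _ => sqr_ge0 _) j Pj; move/eqP; rewrite sqrf_eq0 => /eqP ->.
  by rewrite mul0r.

have q0 : 0 < Num.sqrt e by rewrite sqrtr_gt0 lt_neqAle eq_sym ep.
set q := Num.sqrt e in q0 *.
have qq : q ^+ 2 = e by rewrite sqr_sqrtr.
have key : 2 * q * \sum_(j | P j) a j * b j <= e + e.
  rewrite mulr_sumr.
  apply: (@le_trans _ _ (\sum_(j | P j) (a j ^+ 2 + e * b j ^+ 2))).
    apply: ler_sum => j _.
    rewrite -qq; have := sqr_ge0 (a j - q * b j); nra.
  rewrite big_split /= -mulr_sumr; apply: lerD => //.
  by rewrite -[X in _ <= X]mulr1; apply: ler_wpM2l.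
rewrite -(@ler_pM2l _ (2 * q)); last by rewrite mulr_gt0.
by apply: (le_trans key); rewrite -qq -mulrA -expr2 mulr_natl mulr2n lexx.
Qed.

Theorem lemma4 (R : realType) (k g : R) (M N : nat)
  (U : 'M[R[i]]_M) (lat : 'I_M -> 'I_N) (s : 'I_N -> 'I_M) :
  0 < k -> 1 < g -> (N <= M)%N ->
  M%:R = k * (N%:R `^ g) ->
  (forall a : 'I_N, (#|[set j | lat j == a]| * N)%N = M) ->
  (forall a : 'I_N, lat (s a) = a) ->
  unitary_mx U ->
  forall i : 'I_N,
    crosstalk U s i <=
      2 * Num.sqrt (max_leakage U lat s * (k * N%:R `^ (g + 1))).
Proof.
move=> k0 g1 NM HM _ _ HU i.
set eta := max_leakage U lat s.
have eta0 : 0 <= eta.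
  by rewrite /eta /max_leakage; apply: (big_ind (fun y : R => 0 <= y)) => //= [x y hx hy|a _]; [by rewrite le_max hx | apply: sumr_ge0 => j _; exact: sqr_ge0].
have leak a : leakage U lat s a <= eta.
  by rewrite /eta /max_leakage (bigD1 a) //= le_max lexx.
set x := fun j l => cmod (U j (s l)).
have x0 j l : 0 <= x j l by exact: cmod_ge0.
have pair l : l != i -> \sum_(j < M) x j i * x j l <= 2 * Num.sqrt eta.
  move=> li.
  apply: (@le_trans _ _ (\sum_(j < M | lat j != i) x j i * x j l +
                        \sum_(j < M | lat j != l) x j l * x j i)).
    rewrite [X in X <= _](bigID (fun j => lat j != i)) /=; apply: lerD => //.
    rewrite big_mkcond [X in _ <= X]big_mkcond /=; apply: ler_sum => j _.
    case: (lat j =P i) => [->|Hi] /=.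
      by rewrite eq_sym li mulrC.
    by case: ifP => _; rewrite ?mulr_ge0.
  rewrite mulr2n mulrDl mul1r; apply: lerD; apply: cs => //.
  - exact: leak.
  - by rewrite /x (@col_norm _ _ U _ HU).
  - exact: leak.
  - by rewrite /x (@col_norm _ _ U _ HU).
have Npos : (0 < N)%N by apply: leq_ltn_trans (ltn_ord i).
have -> : N%:R `^ (g + 1) = N%:R `^ g * N%:R :> R.
  rewrite powRD ?powRr1 ?ler0n //.
  by apply/implyP => _; rewrite pnatr_eq0 -lt0n.
rewrite [k * _]mulrA -HM /crosstalk exchange_big /=.
apply: (@le_trans _ _ (\sum_(l < N | l != i) 2 * Num.sqrt eta)).
  by apply: ler_sum => l li; exact: pair.
apply: (@le_trans _ _ (\sum_(l < N) 2 * Num.sqrt eta)).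
  rewrite [X in _ <= X](bigID (fun l => l != i)) /= lerDl.
  by apply: sumr_ge0 => l _; rewrite mulr_ge0 ?sqrtr_ge0.
rewrite sumr_const card_ord -mulrnAr -mulr_natr ler_pM2l // -mulr_natr.
have -> : Num.sqrt eta * N%:R = Num.sqrt (eta * N%:R ^+ 2).
  by rewrite sqrtrM // sqrtr_sqr ger0_norm.
apply: ler_wsqrtr; rewrite expr2 mulrA [X in _ <= X]mulrA ler_wpM2r //.
by apply: ler_wpM2l => //; rewrite ler_nat.
Qed.
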